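(* Let $n\in\mathbb N$ with $n\ge 8$ and $i\in\{1,2\}$. Then $r(T_n^i,T_n')=r(T_n^i,T_n^* )=2n-5$.
   Context: All graphs are finite and simple; a graph ''contains'' $H$ if it has a subgraph isomorphic to $H$. For graphs $G_1,G_2$, the Ramsey number $r(G_1,G_2)$ is the smallest positive integer $N$ such that for every graph $G$ on $N$ vertices, either $G$ contains a copy of $G_1$ or the complement $\overline G$ contains a copy of $G_2$. For $n\ge 5$, $T_n^1$ is the tree with vertex set $\{v_0,\ldots,v_{n-1}\}$ and edges $v_0v_1,\ldots,v_0v_{n-3},v_{n-4}v_{n-2},v_{n-3}v_{n-1}$, and $T_n^2$ is the tree on the same vertex set with edges $v_0v_1,\ldots,v_0v_{n-3},v_{n-3}v_{n-2},v_{n-3}v_{n-1}$. For $n\ge 4$, $T_n'$ is the unique (up to isomorphism) tree on $n$ vertices with maximum degree $n-2$, and $T_n^*$ is the tree on $\{v_0,\ldots,v_{n-1}\}$ with edges $v_0v_1,\ldots,v_0v_{n-3},v_{n-3}v_{n-2},v_{n-2}v_{n-1}$. *)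

(* Defs.v *)
From mathcomp Require Import all_boot.
Set Implicit Arguments. Unset Strict Implicit. Unset Printing Implicit Defensive.

Definition simple_graph (N : nat) (e : rel 'I_N) : Prop :=
  symmetric e /\ irreflexive e.

Definition compl (N : nat) (e : rel 'I_N) : rel 'I_N :=
  fun x y => (x != y) && ~~ e x y.

Definition contains (N k : nat) (G : rel 'I_N) (H : rel 'I_k) : Prop :=
  exists f : 'I_k -> 'I_N, injective f /\ forall x y, H x y -> G (f x) (f y).

Definition ramsey_prop (k1 k2 : nat) (H1 : rel 'I_k1) (H2 : rel 'I_k2)
  (N : nat) : Prop :=
  forall G : rel 'I_N, simple_graph G -> contains G H1 \/ contains (compl G) H2.

Definition ramsey_number_is (k1 k2 : nat) (H1 : rel 'I_k1) (H2 : rel 'I_k2)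
  (r : nat) : Prop :=
  0 < r /\ ramsey_prop H1 H2 r /\
  (forall M, 0 < M -> M < r -> ~ ramsey_prop H1 H2 M).

Definition graph_of (n : nat) (E : nat -> nat -> bool) : rel 'I_n :=
  fun x y => E x y || E y x.
Arguments graph_of : clear implicits.

Definition T1_edges (n : nat) (a b : nat) : bool :=
  [|| (a == 0) && (1 <= b <= n - 3),
      (a == n - 4) && (b == n - 2) |
      (a == n - 3) && (b == n - 1)].

Definition T2_edges (n : nat) (a b : nat) : bool :=
  [|| (a == 0) && (1 <= b <= n - 3),
      (a == n - 3) && (b == n - 2) |
      (a == n - 3) && (b == n - 1)].

(* T_n': the tree with maximum degree n-2; representative:
   v0v1,...,v0v_{n-2}, v_{n-2}v_{n-1}. *)
Definition Tprime_edges (n : nat) (a b : nat) : bool :=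
  ((a == 0) && (1 <= b <= n - 2)) || ((a == n - 2) && (b == n - 1)).

Definition Tstar_edges (n : nat) (a b : nat) : bool :=
  [|| (a == 0) && (1 <= b <= n - 3),
      (a == n - 3) && (b == n - 2) |
      (a == n - 2) && (b == n - 1)].

Definition T1 (n : nat) : rel 'I_n := graph_of n (T1_edges n).
Arguments T1 : clear implicits.
Definition T2 (n : nat) : rel 'I_n := graph_of n (T2_edges n).
Arguments T2 : clear implicits.
Definition Tprime (n : nat) : rel 'I_n := graph_of n (Tprime_edges n).
Arguments Tprime : clear implicits.
Definition Tstar (n : nat) : rel 'I_n := graph_of n (Tstar_edges n).
Arguments Tstar : clear implicits.

Definition Ti (i n : nat) : rel 'I_n := if i == 1 then T1 n else T2 n.
Arguments Ti : clear implicits.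

(* Main.v *)
Require Import Defs.
From mathcomp Require Import all_boot zify.
From Stdlib Require Import Classical_Prop.
Set Implicit Arguments. Unset Strict Implicit. Unset Printing Implicit Defensive.


Ltac clean := repeat match goal with
  | H : ?T |- _ =>
    match T with
    | is_true (leq _ _) => fail 1
    | @eq nat _ _ => fail 1
    | _ => clear H
    end
  end.
Ltac clia := unfold reverse_coercion in *; clean; lia.

Definition nb N (e : rel 'I_N) (v : 'I_N) : {set 'I_N} := [set x | e v x].

Lemma inNb N (e : rel 'I_N) v x : (x \in nb e v) = e v x.
Proof. by rewrite inE. Qed.

Definition mkf N (a : 'I_N) (L : {set 'I_N}) (m : nat) (s : nat -> 'I_N) (j : nat) : 'I_N :=
  if j == 0 then a else if j <= m then nth a (enum L) (j - 1) else s j.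

Lemma mkf0 N (a : 'I_N) (L : {set 'I_N}) m (s : nat -> 'I_N) : mkf a L m s 0 = a.
Proof. by rewrite /mkf eqxx. Qed.

Lemma mkfL N (a : 'I_N) (L : {set 'I_N}) m (s : nat -> 'I_N) j : m <= #|L| -> 0 < j -> j <= m -> mkf a L m s j \in L.
Proof.
move=> mL j0 jm; rewrite /mkf (_ : (j == 0) = false); last by apply/eqP; clia.
have hj : j - 1 < #|L| by clia.
by rewrite -mem_enum jm; apply: mem_nth; rewrite -cardE.
Qed.

Lemma mkfS N (a : 'I_N) (L : {set 'I_N}) m (s : nat -> 'I_N) j : m < j -> mkf a L m s j = s j.
Proof.
move=> mj; rewrite /mkf (_ : (j == 0) = false); last by apply/eqP; clia.
by rewrite (_ : (j <= m) = false) //; apply/negbTE; rewrite -ltnNge.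
Qed.

Lemma mkf_inj N n (a : 'I_N) (L : {set 'I_N}) m (s : nat -> 'I_N) : m < n -> m <= #|L| -> a \notin L ->
  (forall j, m < j -> j < n -> (s j != a) && (s j \notin L)) ->
  (forall j1 j2, m < j1 -> j1 < n -> m < j2 -> j2 < n -> s j1 = s j2 -> j1 = j2) ->
  injective (fun j : 'I_n => mkf a L m s j).
Proof.
move=> hmn hL haL hs hsi [i hi] [j hj] /= E; apply/val_inj => /=.
have cls t : t < n -> [\/ t = 0, 0 < t <= m | m < t].
  move=> tn; case: (posnP t) => [->|t0]; first by constructor 1.
  by case: (leqP t m) => tm; [constructor 2; apply/andP; split|constructor 3].
case: (cls i hi) => [i0|/andP[i0 im]|im]; case: (cls j hj) => [j0|/andP[j0 jm]|jm];
  move: E; rewrite ?i0 ?j0 ?mkf0 //.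
- by move=> E; have := @mkfL _ a L m s _ hL j0 jm; rewrite -E (negbTE haL).
- by move=> E; move: (hs j jm hj); rewrite -(@mkfS _ a L m s _ jm) -E eqxx.
- by move=> E; have := @mkfL _ a L m s _ hL i0 im; rewrite E (negbTE haL).
- rewrite /mkf (_ : (i == 0) = false); last by apply/eqP; clia.
  rewrite (_ : (j == 0) = false); last by apply/eqP; clia.
  have hi' : i - 1 < #|L| by clia.
  have hj' : j - 1 < #|L| by clia.
  rewrite im jm => /eqP; rewrite nth_uniq ?enum_uniq -?cardE //.
  move/eqP; clia.
- rewrite (@mkfS _ a L m s _ jm) => E; move: (hs j jm hj); rewrite -E => /andP[_].
  by rewrite (@mkfL _ a L m s _ hL i0 im).
- by move=> E; move: (hs i im hi); rewrite -(@mkfS _ a L m s _ im) E eqxx.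
- rewrite (@mkfS _ a L m s _ im) => E; move: (hs i im hi); rewrite E => /andP[_].
  by rewrite (@mkfL _ a L m s _ hL j0 jm).
- by rewrite (@mkfS _ a L m s _ im) (@mkfS _ a L m s _ jm); apply: hsi.
Qed.

Lemma mkfV N (a : 'I_N) (L : {set 'I_N}) m (sp : seq 'I_N) t :
  mkf a L m (fun j => nth a sp (j - m.+1)) (m.+1 + t) = nth a sp t.
Proof. rewrite (@mkfS N a L m _ (m.+1 + t)); last clia. by rewrite addKn. Qed.

Lemma mkf_inj2 N n (a : 'I_N) (L : {set 'I_N}) m (sp : seq 'I_N) :
  m < n -> m <= #|L| -> a \notin L -> uniq (a :: sp) -> size sp = n - m.+1 ->
  (forall x, x \in sp -> x \notin L) ->
  injective (fun j : 'I_n => mkf a L m (fun j => nth a sp (j - m.+1)) j).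
Proof.
move=> mn mL aL /= /andP[asp usp] ssp spL.
apply: mkf_inj => //.
- move=> j j1 j2; have hin : nth a sp (j - m.+1) \in sp by apply: mem_nth; rewrite ssp; clia.
  rewrite spL // andbT; apply: contraNneq asp => <-; exact: hin.
- move=> j1 j2 h1 h2 h3 h4 /eqP.
  have k1 : j1 - m.+1 < size sp by rewrite ssp; clia.
  have k2 : j2 - m.+1 < size sp by rewrite ssp; clia.
  rewrite (nth_uniq a k1 k2 usp) => /eqP; clia.
Qed.

Lemma contains_graph N n (g : rel 'I_N) (E : nat -> nat -> bool) (f : 'I_n -> 'I_N) :
  symmetric g -> injective f -> (forall x y : 'I_n, E x y -> g (f x) (f y)) ->
  contains g (graph_of n E).
Proof.
move=> sg fi hE; exists f; split=> // x y; rewrite /graph_of => /orP[/hE //|/hE].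
by rewrite sg.
Qed.

Lemma emb_T2 N n (g : rel 'I_N) a b c d (L : {set 'I_N}) : 8 <= n -> symmetric g ->
  g a b -> g b c -> g b d -> uniq [:: a; b; c; d] ->
  L \subset nb g a -> a \notin L -> b \notin L -> c \notin L -> d \notin L -> n - 4 <= #|L| ->
  contains g (T2 n).
Proof.
move=> n8 sg gab gbc gbd u sL aL bL cL dL hL.
have gL x : x \in L -> g a x by move=> /(subsetP sL); rewrite inNb.
set sp := [:: b; c; d].
apply: (@contains_graph _ _ g _ (fun j : 'I_n => mkf a L (n-4) (fun j => nth a sp (j - (n-4).+1)) j)) => //.
  apply: mkf_inj2 => //; [clia|by rewrite /sp /=; clia|].
  by move=> x; rewrite !inE => /or3P[]/eqP->.
have v0 : n - 3 = (n-4).+1 + 0 by clia.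
have v1 : n - 2 = (n-4).+1 + 1 by clia.
have v2 : n - 1 = (n-4).+1 + 2 by clia.
move=> x y; rewrite /T2_edges => /or3P[/andP[/eqP x0 /andP[y1 y2]]|/andP[/eqP x3 /eqP y2]|/andP[/eqP x3 /eqP y1]].
- rewrite x0 mkf0; case: (leqP y (n-4)) => yl.
    by apply: gL; apply: mkfL => //; clia.
  have -> : nat_of_ord y = (n-4).+1 + 0 by clia.
  by rewrite mkfV.
- by rewrite x3 y2 v0 v1 !mkfV.
- by rewrite x3 y1 v0 v2 !mkfV.
Qed.

Lemma emb_T1 N n (g : rel 'I_N) a b b' c c' (L : {set 'I_N}) : 8 <= n -> symmetric g ->
  g a b -> g a b' -> g b c -> g b' c' -> uniq [:: a; b; b'; c; c'] ->
  L \subset nb g a -> a \notin L -> b \notin L -> b' \notin L -> c \notin L -> c' \notin L ->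
  n - 5 <= #|L| -> contains g (T1 n).
Proof.
move=> n8 sg gab gab' gbc gbc' u sL aL bL b'L cL c'L hL.
have gL x : x \in L -> g a x by move=> /(subsetP sL); rewrite inNb.
set sp := [:: b; b'; c; c'].
apply: (@contains_graph _ _ g _ (fun j : 'I_n => mkf a L (n-5) (fun j => nth a sp (j - (n-5).+1)) j)) => //.
  apply: mkf_inj2 => //; [clia|by rewrite /sp /=; clia|].
  by move=> x; rewrite !inE => /or4P[]/eqP->.
have v0 : n - 4 = (n-5).+1 + 0 by clia.
have v1 : n - 3 = (n-5).+1 + 1 by clia.
have v2 : n - 2 = (n-5).+1 + 2 by clia.
have v3 : n - 1 = (n-5).+1 + 3 by clia.
move=> x y; rewrite /T1_edges => /or3P[/andP[/eqP x0 /andP[y1 y2]]|/andP[/eqP x3 /eqP y2]|/andP[/eqP x3 /eqP y1]].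
- rewrite x0 mkf0; case: (leqP y (n-5)) => yl.
    by apply: gL; apply: mkfL => //; clia.
  have [->|->] : nat_of_ord y = (n-5).+1 + 0 \/ nat_of_ord y = (n-5).+1 + 1 by clia.
    by rewrite mkfV.
  by rewrite mkfV.
- by rewrite x3 y2 v0 v2 !mkfV.
- by rewrite x3 y1 v1 v3 !mkfV.
Qed.

Lemma emb_Tp N n (g : rel 'I_N) v u w (L : {set 'I_N}) : 8 <= n -> symmetric g ->
  g v u -> g u w -> uniq [:: v; u; w] ->
  L \subset nb g v -> v \notin L -> u \notin L -> w \notin L -> n - 3 <= #|L| ->
  contains g (Tprime n).
Proof.
move=> n8 sg gvu guw uq sL aL uL wL hL.
have gL x : x \in L -> g v x by move=> /(subsetP sL); rewrite inNb.
set sp := [:: u; w].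
apply: (@contains_graph _ _ g _ (fun j : 'I_n => mkf v L (n-3) (fun j => nth v sp (j - (n-3).+1)) j)) => //.
  apply: mkf_inj2 => //; [clia|by rewrite /sp /=; clia|].
  by move=> x; rewrite !inE => /orP[]/eqP->.
have v0 : n - 2 = (n-3).+1 + 0 by clia.
have v1 : n - 1 = (n-3).+1 + 1 by clia.
move=> x y; rewrite /Tprime_edges => /orP[/andP[/eqP x0 /andP[y1 y2]]|/andP[/eqP x3 /eqP y2]].
- rewrite x0 mkf0; case: (leqP y (n-3)) => yl.
    by apply: gL; apply: mkfL => //; clia.
  have -> : nat_of_ord y = (n-3).+1 + 0 by clia.
  by rewrite mkfV.
- by rewrite x3 y2 v0 v1 !mkfV.
Qed.

Lemma emb_Ts N n (g : rel 'I_N) v u w x (L : {set 'I_N}) : 8 <= n -> symmetric g ->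
  g v u -> g u w -> g w x -> uniq [:: v; u; w; x] ->
  L \subset nb g v -> v \notin L -> u \notin L -> w \notin L -> x \notin L -> n - 4 <= #|L| ->
  contains g (Tstar n).
Proof.
move=> n8 sg gvu guw gwx uq sL aL uL wL xL hL.
have gL z : z \in L -> g v z by move=> /(subsetP sL); rewrite inNb.
set sp := [:: u; w; x].
apply: (@contains_graph _ _ g _ (fun j : 'I_n => mkf v L (n-4) (fun j => nth v sp (j - (n-4).+1)) j)) => //.
  apply: mkf_inj2 => //; [clia|by rewrite /sp /=; clia|].
  by move=> z; rewrite !inE => /or3P[]/eqP->.
have v0 : n - 3 = (n-4).+1 + 0 by clia.
have v1 : n - 2 = (n-4).+1 + 1 by clia.
have v2 : n - 1 = (n-4).+1 + 2 by clia.
move=> y z; rewrite /Tstar_edges => /or3P[/andP[/eqP x0 /andP[y1 y2]]|/andP[/eqP x3 /eqP y2]|/andP[/eqP x3 /eqP y1]].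
- rewrite x0 mkf0; case: (leqP z (n-4)) => yl.
    by apply: gL; apply: mkfL => //; clia.
  have -> : nat_of_ord z = (n-4).+1 + 0 by clia.
  by rewrite mkfV.
- by rewrite x3 y2 v0 v1 !mkfV.
- by rewrite x3 y1 v1 v2 !mkfV.
Qed.


Lemma cardD_ge (T : finType) (A S : {set T}) : #|A| <= #|A :\: S| + #|S|.
Proof. rewrite cardsD; have := subset_leq_card (subsetIr A S); have := subset_leq_card (subsetIl A S); lia. Qed.

Lemma card2le (T : finType) (a b : T) : #|[set a; b]| <= 2.
Proof. rewrite !cardsU !cards1; lia. Qed.
Lemma card3le (T : finType) (a b c : T) : #|[set a; b; c]| <= 3.
Proof. rewrite !cardsU !cards1; lia. Qed.
Lemma card4le (T : finType) (a b c d : T) : #|[set a; b; c; d]| <= 4.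
Proof. rewrite !cardsU !cards1; lia. Qed.

Lemma uniq3 (T : eqType) (a b c : T) : a != b -> a != c -> b != c -> uniq [:: a; b; c].
Proof. by move=> ab ac bc; rewrite /= !inE !negb_or ab ac bc. Qed.
Lemma uniq4 (T : eqType) (a b c d : T) : a != b -> a != c -> a != d -> b != c -> b != d -> c != d ->
  uniq [:: a; b; c; d].
Proof. by move=> ab ac ad bc bd cd; rewrite /= !inE !negb_or ab ac ad bc bd cd. Qed.
Lemma uniq5 (T : eqType) (a b c d e : T) : a != b -> a != c -> a != d -> a != e -> b != c -> b != d ->
  b != e -> c != d -> c != e -> d != e -> uniq [:: a; b; c; d; e].
Proof. by move=> ab ac ad ae bc bd be cd ce de; rewrite /= !inE !negb_or ab ac ad ae bc bd be cd ce de. Qed.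

Lemma neq_of N (e : rel 'I_N) x y : irreflexive e -> e x y -> x != y.
Proof. by move=> ie h; apply: contraTneq h => ->; rewrite ie. Qed.

Lemma compl_sym N (e : rel 'I_N) : symmetric e -> symmetric (compl e).
Proof. by move=> se x y; rewrite /compl se eq_sym. Qed.

Lemma compl_irr N (e : rel 'I_N) : irreflexive (compl e).
Proof. by move=> x; rewrite /compl eqxx. Qed.

Lemma inNbC N (e : rel 'I_N) v x : (x \in nb (compl e) v) = (v != x) && ~~ e v x.
Proof. by rewrite inE. Qed.

Lemma deg_sum N (e : rel 'I_N) v : irreflexive e -> #|nb e v| + #|nb (compl e) v| = N - 1.
Proof.
move=> ie.
have -> : nb (compl e) v = (~: nb e v) :\ v.
  by apply/setP => x; rewrite !inE /compl eq_sym.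
have := cardsC (nb e v); rewrite card_ord.
have := cardsD1 v (~: nb e v); rewrite !inE ie /=; move=> h1 h2; unfold reverse_coercion in *; lia.
Qed.

Lemma notin_nb N (e : rel 'I_N) v : irreflexive e -> v \notin nb e v.
Proof. by move=> ie; rewrite inNb ie. Qed.

Ltac slia := clia.

Lemma inD1 (T : finType) (A S : {set T}) x : x \in S -> x \notin A :\: S.
Proof. by move=> h; rewrite inE h. Qed.

Lemma pick1 (T : finType) (A : {set T}) : 0 < #|A| -> exists x, x \in A.
Proof. by move/card_gt0P. Qed.

Lemma pick2 (T : finType) (A : {set T}) : 1 < #|A| -> exists x y, [/\ x \in A, y \in A & x != y].
Proof. by move/card_gt1P. Qed.


Lemma notinL (T : finType) (A S : {set T}) x : x \in S -> x \notin A :\: S.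
Proof. by move=> h; rewrite inE h. Qed.

Ltac neq ie se := first [done | by rewrite eq_sym | by apply: (neq_of ie) | by apply: (neq_of ie); rewrite se
  | by rewrite eq_sym; apply: (neq_of ie) | by rewrite eq_sym; apply: (neq_of ie); rewrite se].

Ltac inS := rewrite !inE ?eqxx ?orbT ?orTb.

Lemma caseA N n (e : rel 'I_N) a : 8 <= n -> symmetric e -> irreflexive e ->
  #|[set y | #|nb e y| <= 3]| <= 5 -> n - 1 <= #|nb e a| ->
  contains e (T1 n) /\ contains e (T2 n).
Proof.
move=> n8 se ie hY ha.
set Y := [set y | #|nb e y| <= 3] in hY.
have [b [b' [hb hb' bb']]] : exists b b', [/\ b \in nb e a :\: Y, b' \in nb e a :\: Y & b != b'].
  by apply: pick2; have := cardD_ge (nb e a) Y; slia.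
move: hb hb'; rewrite !inE -!ltnNge => /andP[db eab] /andP[db' eab'].
have anL S : a \notin nb e a :\: S by rewrite !inE ie andbF.
have ab := neq_of ie eab; have ab' := neq_of ie eab'.
split.
- have [c hc] : exists c, c \in nb e b :\: [set a; b'].
    by apply: pick1; have := cardD_ge (nb e b) [set a; b']; have := card2le a b'; slia.
  move: hc; rewrite !inE negb_or => /andP[/andP[ca cb'] ebc].
  have [c' hc'] : exists c', c' \in nb e b' :\: [set a; b; c].
    by apply: pick1; have := cardD_ge (nb e b') [set a; b; c]; have := card3le a b c; slia.
  move: hc'; rewrite !inE !negb_or => /andP[/andP[/andP[c'a c'b] c'c] eb'c'].
  apply: (emb_T1 (L := nb e a :\: [set b; b'; c; c']) n8 se eab eab' ebc eb'c').
  + by apply: uniq5; neq ie se.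
  + exact: subsetDl.
  + exact: anL.
  + by apply: notinL; inS.
  + by apply: notinL; inS.
  + by apply: notinL; inS.
  + by apply: notinL; inS.
  + by have := cardD_ge (nb e a) [set b; b'; c; c']; have := card4le b b' c c'; slia.
- have [c [d [hc hd cd]]] : exists c d, [/\ c \in nb e b :\ a, d \in nb e b :\ a & c != d].
    by apply: pick2; have := cardsD1 a (nb e b); have := leq_b1 (a \in nb e b); slia.
  move: hc hd; rewrite !inE => /andP[ca ebc] /andP[da ebd].
  apply: (emb_T2 (L := nb e a :\: [set b; c; d]) n8 se eab ebc ebd).
  + by apply: uniq4; neq ie se.
  + exact: subsetDl.
  + exact: anL.
  + by apply: notinL; inS.
  + by apply: notinL; inS.
  + by apply: notinL; inS.
  + by have := cardD_ge (nb e a) [set b; c; d]; have := card3le b c d; slia.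
Qed.

Lemma escape N (e : rel 'I_N) a x : symmetric e -> irreflexive e ->
  x \in nb (compl e) a -> #|nb (compl e) a :\ x| < #|nb e x| -> exists b, e a b /\ e x b.
Proof.
move=> se ie hx hc.
have [b hb] : exists b, b \in nb e x :\: (nb (compl e) a :\ x).
  by apply: pick1; have := cardD_ge (nb e x) (nb (compl e) a :\ x); slia.
move: hb; rewrite in_setD => /andP[hb exb].
move: (hx); rewrite inNbC => /andP[ax nax].
have bx : b != x by rewrite eq_sym; apply: (neq_of ie); rewrite inNb in exb.
have bB : b \notin nb (compl e) a.
  by apply: contra hb => hbB; rewrite in_setD1 hbB bx.
exists b; split; last by rewrite inNb in exb.
move: bB; rewrite inNbC negb_and !negbK => /orP[/eqP ab|//].
by move: exb; rewrite inNb -ab se (negbTE nax).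
Qed.

Lemma caseB1 N n (e : rel 'I_N) a : 8 <= n -> N = 2 * n - 5 -> symmetric e -> irreflexive e ->
  (forall v, n - 3 <= #|nb e v|) -> #|nb e a| = n - 2 ->
  contains e (T1 n) /\ contains e (T2 n).
Proof.
move=> n8 hN se ie hd ha.
have hB := deg_sum a ie.
have anL S : a \notin nb e a :\: S by rewrite !inE ie andbF.
have [c hc] : exists c, c \in nb (compl e) a by apply: pick1; slia.
have [b [eab ecb]] : exists b, e a b /\ e c b.
  apply: (escape se ie hc); have := hd c; have := cardsD1 c (nb (compl e) a); rewrite hc; slia.
move: hc; rewrite inNbC => /andP[ac nac].
have ebc : e b c by rewrite se.
have ab := neq_of ie eab.
have cL S : c \notin nb e a :\: S by rewrite !inE (negbTE nac) andbF.
split.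
- have [b' hb'] : exists b', b' \in nb e a :\ b.
    by apply: pick1; have := cardsD1 b (nb e a); have := leq_b1 (b \in nb e a); slia.
  move: hb'; rewrite !inE => /andP[b'b eab'].
  have [c' hc'] : exists c', c' \in nb e b' :\: [set a; b; c].
    by apply: pick1; have := hd b'; have := cardD_ge (nb e b') [set a; b; c]; have := card3le a b c; slia.
  move: hc'; rewrite !inE !negb_or => /andP[/andP[/andP[c'a c'b] c'c] eb'c'].
  have b'c : b' != c by apply: contraNneq nac => <-.
  apply: (emb_T1 (L := nb e a :\: [set b; b'; c']) n8 se eab eab' ebc eb'c').
  + by apply: uniq5; neq ie se.
  + exact: subsetDl.
  + exact: anL.
  + by apply: notinL; inS.
  + by apply: notinL; inS.
  + exact: cL.
  + by apply: notinL; inS.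
  + by have := cardD_ge (nb e a) [set b; b'; c']; have := card3le b b' c'; slia.
- have [d hd'] : exists d, d \in nb e b :\: [set a; c].
    by apply: pick1; have := hd b; have := cardD_ge (nb e b) [set a; c]; have := card2le a c; slia.
  move: hd'; rewrite !inE negb_or => /andP[/andP[da dc] ebd].
  apply: (emb_T2 (L := nb e a :\: [set b; d]) n8 se eab ebc ebd).
  + by apply: uniq4; neq ie se.
  + exact: subsetDl.
  + exact: anL.
  + by apply: notinL; inS.
  + exact: cL.
  + by apply: notinL; inS.
  + by have := cardD_ge (nb e a) [set b; d]; have := card2le b d; slia.
Qed.

Lemma caseB2 N n (e : rel 'I_N) (a : 'I_N) : 8 <= n -> N = 2 * n - 5 -> symmetric e -> irreflexive e ->
  (forall v, #|nb e v| = n - 3) ->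
  contains e (T1 n) /\ contains e (T2 n).
Proof.
move=> n8 hN se ie hd.
have hB := deg_sum a ie.
set A := nb e a in hB *; set B := nb (compl e) a in hB *.
have hA : #|A| = n - 3 by apply: hd.
have anL S : a \notin A :\: S by rewrite !inE ie andbF.
have inB x : x \in B -> (a != x) && ~~ e a x by rewrite inNbC.
have F x : x \in B -> exists b, e a b /\ e x b.
  move=> hx; apply: (escape se ie hx); have := hd x; have := cardsD1 x B; rewrite hx -/B; slia.
have notA S x : x \in B -> x \notin A :\: S.
  by move=> /inB /andP[_ h]; rewrite !inE (negbTE h) andbF.
have [x1 hx1] : exists x1, x1 \in B by apply: pick1; slia.
have [b1 [eab1 ex1b1]] := F x1 hx1.
have /andP[ax1 nax1] := inB x1 hx1.
split.
- case: (boolP [exists x2 in B :\ x1, exists b2 in A :\ b1, e x2 b2]).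
  + case/exists_inP => x2; rewrite in_setD1 => /andP[x2x1 hx2] /exists_inP [b2].
    rewrite in_setD1 inNb => /andP[b2b1 eab2] ex2b2.
    have /andP[ax2 nax2] := inB x2 hx2.
    have b1x2 : b1 != x2 by apply: contraNneq nax2 => <-.
    have b2x1 : b2 != x1 by apply: contraNneq nax1 => <-.
    have eb1x1 : e b1 x1 by rewrite se.
    have eb2x2 : e b2 x2 by rewrite se.
    apply: (emb_T1 (L := A :\: [set b1; b2]) n8 se eab1 eab2 eb1x1 eb2x2).
    * by apply: uniq5; neq ie se.
    * exact: subsetDl.
    * exact: anL.
    * by apply: notinL; inS.
    * by apply: notinL; inS.
    * exact: notA.
    * exact: notA.
    * by have := cardD_ge A [set b1; b2]; have := card2le b1 b2; slia.
  + move=> H; exfalso.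
    have sub : a |: B \subset nb e b1.
      apply/subsetP => y; rewrite in_setU1 => /orP[/eqP->|yB]; rewrite inNb; first by rewrite se.
      case: (eqVneq y x1) => [->|yx1]; first by rewrite se.
      have [b [eab eyb]] := F y yB.
      case: (eqVneq b b1) => [<-|bb1]; first by rewrite se.
      case/negP: H; apply/exists_inP; exists y; first by rewrite in_setD1 yx1.
      by apply/exists_inP; exists b => //; rewrite in_setD1 bb1 inNb.
    have := subset_leq_card sub; rewrite cardsU1 hd.
    have -> : a \notin B by rewrite inNbC eqxx.
    slia.
- case: (boolP [exists b in A, 1 < #|nb e b :&: B|]).
  + case/exists_inP => b; rewrite inNb => eab /pick2 [c [d [hc hd' cd]]].
    move: hc hd'; rewrite !in_setI => /andP[ebc hcB] /andP[ebd hdB].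
    rewrite inNb in ebc; rewrite inNb in ebd.
    have /andP[ac nac] := inB c hcB; have /andP[ad nad] := inB d hdB.
    apply: (emb_T2 (L := A :\ b) n8 se eab ebc ebd).
    * by apply: uniq4; neq ie se.
    * exact: subsetDl.
    * exact: anL.
    * by apply: notinL; inS.
    * exact: notA.
    * exact: notA.
    * by have := cardsD1 b A; have := leq_b1 (b \in A); slia.
  + move=> H.
    have two b y z : e a b -> e b y -> e b z -> y \in B -> z \in B -> y = z.
      move=> eab eby ebz yB zB.
      have : #|nb e b :&: B| <= 1.
        rewrite leqNgt; apply: contra H => h; apply/exists_inP; exists b; [by rewrite inNb | exact: h].
      have hy : y \in nb e b :&: B by rewrite in_setI inNb eby yB.
      have hz : z \in nb e b :&: B by rewrite in_setI inNb ebz zB.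
      by move/card_le1_eqP => hle; apply: (hle z y hz hy).
    case: (boolP [exists y in nb e b1, [&& y != a, y != x1 & ~~ e x1 y]]).
    * case/exists_inP => y; rewrite inNb => eb1y /and3P[ya yx nxy].
      have eb1a : e b1 a by rewrite se.
      apply: (emb_T2 (L := nb e x1 :\ b1) n8 se ex1b1 eb1a eb1y).
      -- by apply: uniq4; neq ie se.
      -- exact: subsetDl.
      -- by rewrite !inE ie andbF.
      -- by apply: notinL; inS.
      -- by rewrite !inE se (negbTE nax1) andbF.
      -- by rewrite !inE (negbTE nxy) andbF.
      -- by have := hd x1; have := cardsD1 b1 (nb e x1); have := leq_b1 (b1 \in nb e x1); slia.
    * move=> H2; exfalso.
      have H2' y : e b1 y -> y != a -> y != x1 -> e x1 y.
        move=> eb1y ya yx; apply/negPn; apply: contra H2 => h.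
        by apply/exists_inP; exists y; rewrite ?inNb // ya yx h.
      set P := nb e x1 :&: A.
      have sub : b1 |: (nb e b1 :\: [set a; x1]) \subset P.
        apply/subsetP => y; rewrite in_setU1 => /orP[/eqP->|]; first by rewrite in_setI !inNb ex1b1 eab1.
        rewrite !inE negb_or => /andP[/andP[ya yx] eb1y].
        rewrite H2' //=; apply/negPn/negP => nay.
        have yB : y \in B by rewrite inNbC eq_sym ya nay.
        by move: yx; rewrite (two b1 x1 y eab1 _ eb1y hx1 yB) ?eqxx // se.
      have cP : n - 4 <= #|P|.
        have := subset_leq_card sub; rewrite cardsU1.
        have -> : b1 \notin nb e b1 :\: [set a; x1] by rewrite !inE ie andbF.
        have := cardD_ge (nb e b1) [set a; x1]; have := card2le a x1; have := hd b1; slia.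
      have PA : P \subset A by apply: subsetIr.
      have cAP : #|A :\: P| <= 1.
        rewrite cardsD (setIidPr PA); slia.
      have [x' [x'' [h' h'' x'x'']]] : exists x' x'', [/\ x' \in B :\ x1, x'' \in B :\ x1 & x' != x''].
        by apply: pick2; have := cardsD1 x1 B; rewrite hx1; slia.
      move: h' h''; rewrite !in_setD1 => /andP[x'x1 hx'] /andP[x''x1 hx''].
      have [b' [eab' ex'b']] := F x' hx'.
      have [b'' [eab'' ex''b'']] := F x'' hx''.
      have nP b x : e a b -> e x b -> x \in B -> x != x1 -> b \in A :\: P.
        move=> eab exb xB xx1; rewrite in_setD inNb eab andbT; apply/negP.
        rewrite in_setI inNb => /andP[ex1b _].
        by move: xx1; rewrite (two b x x1 eab _ _ xB hx1) ?eqxx // se.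
      have := nP _ _ eab' ex'b' hx' x'x1; have := nP _ _ eab'' ex''b'' hx'' x''x1.
      move: cAP => /card_le1_eqP hle h1 h2; have eb := hle _ _ h2 h1.
      have ebx' : e b' x' by rewrite se.
      have ebx'' : e b' x'' by rewrite -eb se.
      by move: x'x''; rewrite (two b' x' x'' eab' ebx' ebx'' hx' hx'') eqxx.
Qed.

Lemma core N n (e : rel 'I_N) : 8 <= n -> N = 2 * n - 5 -> symmetric e -> irreflexive e ->
  #|[set y | #|nb e y| <= 3]| <= 5 ->
  ((forall v, #|nb e v| <= n - 2) -> forall v, n - 3 <= #|nb e v|) ->
  contains e (T1 n) /\ contains e (T2 n).
Proof.
move=> n8 hN se ie hY hZ.
case: (boolP [exists a, n - 1 <= #|nb e a|]) => [/existsP[a ha]|H]; first exact: (caseA n8 se ie hY ha).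
have hmax v : #|nb e v| <= n - 2.
  by move/existsPn: H => /(_ v); rewrite -ltnNge; slia.
have hmin := hZ hmax.
case: (boolP [exists a, n - 2 <= #|nb e a|]) => [/existsP[a ha]|H2].
  by apply: (@caseB1 N n e a) => //; have := hmax a; slia.
have N0 : 0 < N by slia.
apply: (@caseB2 N n e (Ordinal N0)) => // v.
by move/existsPn: H2 => /(_ v); rewrite -ltnNge; have := hmin v; slia.
Qed.


Lemma findu N n (e : rel 'I_N) v r : symmetric e -> irreflexive e ->
  #|nb e r| <= n - 2 -> n - 2 <= #|nb (compl e) v| -> e v r ->
  exists u, compl e v u /\ compl e u r.
Proof.
move=> se ie hr hv evr.
case: (boolP [exists u in nb (compl e) v, compl e u r]).
  by case/exists_inP => u; rewrite inNb => h1 h2; exists u.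
move=> H; exfalso.
have sub : v |: nb (compl e) v \subset nb e r.
  apply/subsetP => y; rewrite in_setU1 => /orP[/eqP->|yv]; rewrite inNb; first by rewrite se.
  have : ~~ compl e y r by apply: contra H => h; apply/exists_inP; exists y.
  rewrite /compl negb_and !negbK => /orP[/eqP yr|]; last by rewrite se.
  by move: yv; rewrite yr inNbC evr andbF.
have := subset_leq_card sub; rewrite cardsU1.
have -> : v \notin nb (compl e) v by rewrite inNbC eqxx.
slia.
Qed.

Lemma part1Y N n (e : rel 'I_N) : 8 <= n -> N = 2 * n - 5 -> symmetric e -> irreflexive e ->
  ~ contains (compl e) (Tprime n) -> #|[set y | #|nb e y| <= 3]| <= 5.
Proof.
move=> n8 hN se ie H; rewrite leqNgt; apply/negP => hY.
set Y := [set y | #|nb e y| <= 3] in hY *.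
have [y1 hy1] : exists y1, y1 \in Y by apply: pick1; slia.
have d1 : #|nb e y1| <= 3 by move: hy1; rewrite inE.
have [y2 hy2] : exists y2, y2 \in (Y :\ y1) :\: nb e y1.
  apply: pick1; have := cardD_ge (Y :\ y1) (nb e y1); have := cardsD1 y1 Y; rewrite hy1; slia.
move: hy2; rewrite in_setD in_setD1 inNb => /andP[ny12 /andP[y21 hy2]].
have d2 : #|nb e y2| <= 3 by move: hy2; rewrite inE.
have c12 : compl e y1 y2 by rewrite /compl eq_sym y21 ny12.
have [w hw] : exists w, w \in nb (compl e) y2 :\ y1.
  apply: pick1; have := deg_sum y2 ie; have := cardsD1 y1 (nb (compl e) y2); have := leq_b1 (y1 \in nb (compl e) y2); slia.
move: hw; rewrite in_setD1 inNb => /andP[wy1 c2w].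
apply: H; apply: (emb_Tp (L := nb (compl e) y1 :\: [set y2; w]) n8 (compl_sym se) c12 c2w).
- by apply: uniq3; [exact: (neq_of (@compl_irr _ e)) | rewrite eq_sym | exact: (neq_of (@compl_irr _ e))].
- exact: subsetDl.
- by rewrite !inE /compl eqxx /= andbF.
- by apply: notinL; inS.
- by apply: notinL; inS.
- have := deg_sum y1 ie; have := cardD_ge (nb (compl e) y1) [set y2; w]; have := card2le y2 w; slia.
Qed.

Ltac neqc e se := neq (@compl_irr _ e) (compl_sym se).

Lemma notin_self N (e : rel 'I_N) v S : v \notin nb (compl e) v :\: S.
Proof. by rewrite !inE /compl eqxx /= andbF. Qed.

Lemma notin_nbc N (e : rel 'I_N) v r S : e v r -> r \notin nb (compl e) v :\: S.
Proof. by move=> h; rewrite !inE /compl h /= !andbF. Qed.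

Lemma part2Y N n (e : rel 'I_N) : 8 <= n -> N = 2 * n - 5 -> symmetric e -> irreflexive e ->
  ~ contains (compl e) (Tstar n) -> #|[set y | #|nb e y| <= 3]| <= 5.
Proof.
move=> n8 hN se ie H; rewrite leqNgt; apply/negP => hY.
set Y := [set y | #|nb e y| <= 3] in hY *.
have [y1 hy1] : exists y1, y1 \in Y by apply: pick1; slia.
have d1 : #|nb e y1| <= 3 by move: hy1; rewrite inE.
have [y2 hy2] : exists y2, y2 \in (Y :\ y1) :\: nb e y1.
  apply: pick1; have := cardD_ge (Y :\ y1) (nb e y1); have := cardsD1 y1 Y; rewrite hy1; slia.
move: hy2; rewrite in_setD in_setD1 inNb => /andP[ny12 /andP[y21 hy2]].
have d2 : #|nb e y2| <= 3 by move: hy2; rewrite inE.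
have c12 : compl e y1 y2 by rewrite /compl eq_sym y21 ny12.
have [z hz] : exists z, z \in (Y :\: [set y1; y2]) :\: nb e y2.
  apply: pick1; have := cardD_ge (Y :\: [set y1; y2]) (nb e y2); have := cardD_ge Y [set y1; y2].
  have := card2le y1 y2; slia.
move: hz; rewrite in_setD inNb => /andP[ny2z]; rewrite in_setD => /andP[hz1 hzY].
move: hz1; rewrite !inE negb_or => /andP[zy1 zy2].
have dz : #|nb e z| <= 3 by move: hzY; rewrite inE.
have c2z : compl e y2 z by rewrite /compl eq_sym zy2 ny2z.
have [x hx] : exists x, x \in nb (compl e) z :\: [set y1; y2].
  apply: pick1; have := deg_sum z ie; have := cardD_ge (nb (compl e) z) [set y1; y2].
  have := card2le y1 y2; slia.
move: hx; rewrite in_setD inNb !inE negb_or => /andP[/andP[xy1 xy2] czx].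
apply: H; apply: (emb_Ts (L := nb (compl e) y1 :\: [set y2; z; x]) n8 (compl_sym se) c12 c2z czx).
- by apply: uniq4; neqc e se.
- exact: subsetDl.
- exact: notin_self.
- by apply: notinL; inS.
- by apply: notinL; inS.
- by apply: notinL; inS.
- have := deg_sum y1 ie; have := cardD_ge (nb (compl e) y1) [set y2; z; x]; have := card3le y2 z x; slia.
Qed.

Lemma part1Z N n (e : rel 'I_N) : 8 <= n -> N = 2 * n - 5 -> symmetric e -> irreflexive e ->
  ~ contains (compl e) (Tprime n) ->
  (forall v, #|nb e v| <= n - 2) -> forall v, n - 3 <= #|nb e v|.
Proof.
move=> n8 hN se ie H hmax v; rewrite leqNgt; apply/negP => hv.
have ds := deg_sum v ie.
case: (posnP #|nb e v|) => [d0|dpos].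
- have [u hu] : exists u, u \in nb (compl e) v by apply: pick1; slia.
  rewrite inNb in hu.
  have [w hw] : exists w, w \in nb (compl e) u :\ v.
    apply: pick1; have := deg_sum u ie; have := hmax u; have := cardsD1 v (nb (compl e) u).
    have := leq_b1 (v \in nb (compl e) u); slia.
  move: hw; rewrite in_setD1 inNb => /andP[wv cuw].
  apply: H; apply: (emb_Tp (L := nb (compl e) v :\: [set u; w]) n8 (compl_sym se) hu cuw).
  + by apply: uniq3; neqc e se.
  + exact: subsetDl.
  + exact: notin_self.
  + by apply: notinL; inS.
  + by apply: notinL; inS.
  + have := cardD_ge (nb (compl e) v) [set u; w]; have := card2le u w; slia.
- have [r hr] : exists r, r \in nb e v by apply: pick1.
  rewrite inNb in hr.
  have [u [cvu cur]] : exists u, compl e v u /\ compl e u r.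
    by apply: (@findu N n e v r se ie (hmax r) _ hr); slia.
  apply: H; apply: (emb_Tp (L := nb (compl e) v :\ u) n8 (compl_sym se) cvu cur).
  + by apply: uniq3; [neqc e se | neq ie se | neqc e se].
  + exact: subsetDl.
  + exact: notin_self.
  + by apply: notinL; inS.
  + exact: notin_nbc.
  + have := cardsD1 u (nb (compl e) v); have := leq_b1 (u \in nb (compl e) v); slia.
Qed.

Lemma part2Z N n (e : rel 'I_N) : 8 <= n -> N = 2 * n - 5 -> symmetric e -> irreflexive e ->
  ~ contains (compl e) (Tstar n) ->
  (forall v, #|nb e v| <= n - 2) -> forall v, n - 3 <= #|nb e v|.
Proof.
move=> n8 hN se ie H hmax v; rewrite leqNgt; apply/negP => hv.
have ds := deg_sum v ie.
case: (posnP #|nb e v|) => [d0|dpos].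
- have [u hu] : exists u, u \in nb (compl e) v by apply: pick1; slia.
  rewrite inNb in hu.
  have [w hw] : exists w, w \in nb (compl e) u :\ v.
    apply: pick1; have := deg_sum u ie; have := hmax u; have := cardsD1 v (nb (compl e) u).
    have := leq_b1 (v \in nb (compl e) u); slia.
  move: hw; rewrite in_setD1 inNb => /andP[wv cuw].
  have [x hx] : exists x, x \in nb (compl e) w :\: [set v; u].
    apply: pick1; have := deg_sum w ie; have := hmax w; have := cardD_ge (nb (compl e) w) [set v; u].
    have := card2le v u; slia.
  move: hx; rewrite in_setD inNb !inE negb_or => /andP[/andP[xv xu] cwx].
  apply: H; apply: (emb_Ts (L := nb (compl e) v :\: [set u; w; x]) n8 (compl_sym se) hu cuw cwx).
  + by apply: uniq4; neqc e se.
  + exact: subsetDl.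
  + exact: notin_self.
  + by apply: notinL; inS.
  + by apply: notinL; inS.
  + by apply: notinL; inS.
  + have := cardD_ge (nb (compl e) v) [set u; w; x]; have := card3le u w x; slia.
- have [r hr] : exists r, r \in nb e v by apply: pick1.
  rewrite inNb in hr.
  have [u [cvu cur]] : exists u, compl e v u /\ compl e u r.
    by apply: (@findu N n e v r se ie (hmax r) _ hr); slia.
  have [x hx] : exists x, x \in nb (compl e) r :\ u.
    apply: pick1; have := deg_sum r ie; have := hmax r; have := cardsD1 u (nb (compl e) r).
    have := leq_b1 (u \in nb (compl e) r); slia.
  move: hx; rewrite in_setD1 inNb => /andP[xu crx].
  have vx : v != x by apply: contraTneq crx => <-; rewrite /compl se hr andbF.
  apply: H; apply: (emb_Ts (L := nb (compl e) v :\: [set u; x]) n8 (compl_sym se) cvu cur crx).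
  + by apply: uniq4; first [neqc e se | neq ie se].
  + exact: subsetDl.
  + exact: notin_self.
  + by apply: notinL; inS.
  + exact: notin_nbc.
  + by apply: notinL; inS.
  + have := cardD_ge (nb (compl e) v) [set u; x]; have := card2le u x; slia.
Qed.


Definition G0 (M c : nat) : rel 'I_M := fun x y => (x != y) && ((x < c) == (y < c)).
Arguments G0 : clear implicits.

Lemma G0_simple M c : simple_graph (G0 M c).
Proof.
split; first by move=> x y; rewrite /G0 eq_sym (eq_sym (x < c)).
by move=> x; rewrite /G0 eqxx.
Qed.

Lemma card_range M lo hi : #|[set x : 'I_M | lo <= x < hi]| <= hi - lo.
Proof.
rewrite cardE -(size_map val) -(size_iota lo (hi - lo)); apply: uniq_leq_size.
  by rewrite map_inj_uniq ?enum_uniq //; apply: val_inj.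
move=> y /mapP [x]; rewrite mem_enum inE => /andP[h1 h2] ->; rewrite mem_iota.
rewrite /=; apply/andP; split=> //; clia.
Qed.

Lemma side_card M c b : M <= 2 * c -> #|[set x : 'I_M | (x < c) == b]| <= c.
Proof.
move=> hM; case: b.
  have h1 := card_range M 0 c.
  have h2 : #|[set x : 'I_M | (x < c) == true]| <= #|[set x : 'I_M | 0 <= x < c]|.
    by apply: subset_leq_card; apply/subsetP => x; rewrite !inE eqb_id.
  clia.
have h1 := card_range M c M.
have h2 : #|[set x : 'I_M | (x < c) == false]| <= #|[set x : 'I_M | c <= x < M]|.
  apply: subset_leq_card; apply/subsetP => x; rewrite !inE eqbF_neg -leqNgt => ->.
  exact: ltn_ord.
clia.
Qed.

Lemma G0_side M c x y : G0 M c x y -> (x < c) = (y < c).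
Proof. by move=> /andP[_ /eqP]. Qed.

Lemma cG0_side M c x y : compl (G0 M c) x y -> (x < c) = ~~ (y < c).
Proof.
rewrite /compl /G0 => /andP[xy]; rewrite xy /=.
by case: (x < c); case: (y < c).
Qed.

Lemma img_bound M c m (f : 'I_m -> 'I_M) b : M <= 2 * c -> injective f ->
  (forall j, (f j < c) = b) -> m <= c.
Proof.
move=> hM fi hs.
have h3 : #|[set f x | x in 'I_m]| = m by rewrite card_imset // card_ord.
have h1 := @side_card M c b hM.
have h2 : #|[set f x | x in 'I_m]| <= #|[set x : 'I_M | (x < c) == b]|.
  apply: subset_leq_card; apply/subsetP => y /imsetP [j _ ->]; rewrite inE hs.
  by rewrite eqxx.
clia.
Qed.

Lemma noTi M n i : 8 <= n -> M <= 2 * (n - 3) -> ~ contains (G0 M (n - 3)) (Ti i n).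
Proof.
move=> n8 hM [f [fi hf]].
have sd x y : Ti i n x y -> (f x < n - 3) = (f y < n - 3) by move/hf/G0_side.
have n0 : 0 < n by clia.
pose z := Ordinal n0.
have e0 (j : 'I_n) : 1 <= j <= n - 3 -> Ti i n z j.
  by move=> hj; rewrite /Ti; case: (i == 1); rewrite /T1 /T2 /graph_of /T1_edges /T2_edges /= hj.
have eP (p j : 'I_n) : val p = (if i == 1 then n - 4 else n - 3) -> val j = n - 2 -> Ti i n p j.
  move=> vp vj; rewrite /Ti; case: (i == 1) vp => /= vp;
  by rewrite /T1 /T2 /graph_of /T1_edges /T2_edges vp vj !eqxx /= ?orbT.
have eQ (q j : 'I_n) : val q = n - 3 -> val j = n - 1 -> Ti i n q j.
  move=> vq vj; rewrite /Ti; case: (i == 1);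
  by rewrite /T1 /T2 /graph_of /T1_edges /T2_edges vq vj !eqxx /= ?orbT.
have side (j : 'I_n) : (f j < n - 3) = (f z < n - 3).
  have [j0|jpos] := posnP j.
    by have -> : j = z by apply: val_inj.
  case: (leqP j (n - 3)) => j1.
    by rewrite (sd _ _ (e0 j _)) //; rewrite jpos j1.
  have hp : (if i == 1 then n - 4 else n - 3) < n by case: (i == 1); clia.
  have hq : n - 3 < n by clia.
  pose p := Ordinal hp; pose q := Ordinal hq.
  have sp : (f p < n - 3) = (f z < n - 3).
    rewrite (sd _ _ (e0 p _)) //= ; by case: (i == 1); apply/andP; split; clia.
  have sq : (f q < n - 3) = (f z < n - 3).
    by rewrite (sd _ _ (e0 q _)) //=; apply/andP; split; clia.
  have [jn2|jn2] := eqVneq (nat_of_ord j) (n - 2).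
    by rewrite -sp (sd _ _ (eP p j erefl jn2)).
  have jn1 : nat_of_ord j = n - 1.
    by have := ltn_ord j; move: jn2; rewrite neq_ltn => /orP[] h1 h2; clia.
  by rewrite -sq (sd _ _ (eQ q j erefl jn1)).
have := @img_bound M (n - 3) n f (f z < n - 3) hM fi side.
clia.
Qed.

Lemma noTp M n : 8 <= n -> M <= 2 * (n - 3) -> ~ contains (compl (G0 M (n - 3))) (Tprime n).
Proof.
move=> n8 hM [f [fi hf]].
have sd x y : Tprime n x y -> (f x < n - 3) = ~~ (f y < n - 3) by move/hf/cG0_side.
have n0 : 0 < n by clia.
pose z := Ordinal n0.
have e0 (j : 'I_n) : 1 <= j <= n - 2 -> Tprime n z j.
  by move=> hj; rewrite /Tprime /graph_of /Tprime_edges /= hj.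
have hk (k : 'I_(n - 2)) : k.+1 < n by have := ltn_ord k; clia.
pose h k := f (Ordinal (hk k)).
have hi : injective h.
  move=> k1 k2 /fi /(congr1 val) /= [] hk12; exact: val_inj.
have side : forall k, (h k < n - 3) = ~~ (f z < n - 3).
  move=> k; have hk1 : 1 <= Ordinal (hk k) <= n - 2.
    by have := ltn_ord k; move=> ?; apply/andP; split; rewrite /=; clia.
  by rewrite (sd _ _ (e0 _ hk1)) negbK.
have := @img_bound M (n - 3) (n - 2) h (~~ (f z < n - 3)) hM hi side.
clia.
Qed.

Lemma noTs M n : 8 <= n -> M <= 2 * (n - 3) -> ~ contains (compl (G0 M (n - 3))) (Tstar n).
Proof.
move=> n8 hM [f [fi hf]].
have sd x y : Tstar n x y -> (f x < n - 3) = ~~ (f y < n - 3) by move/hf/cG0_side.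
have n0 : 0 < n by clia.
pose z := Ordinal n0.
have e0 (j : 'I_n) : 1 <= j <= n - 3 -> Tstar n z j.
  by move=> hj; rewrite /Tstar /graph_of /Tstar_edges /= hj.
have h3 : n - 3 < n by clia.
have h2 : n - 2 < n by clia.
have h1 : n - 1 < n by clia.
pose q3 := Ordinal h3; pose q2 := Ordinal h2; pose q1 := Ordinal h1.
have s3 : (f q3 < n - 3) = ~~ (f z < n - 3).
  by rewrite (sd _ _ (e0 q3 _)) ?negbK //=; apply/andP; split; clia.
have s2 : (f q2 < n - 3) = (f z < n - 3).
  have : Tstar n q3 q2 by rewrite /Tstar /graph_of /Tstar_edges /= !eqxx /= ?orbT.
  by move/sd; rewrite s3 => /(congr1 negb); rewrite !negbK.
have s1 : (f q1 < n - 3) = ~~ (f z < n - 3).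
  have : Tstar n q2 q1 by rewrite /Tstar /graph_of /Tstar_edges /= !eqxx /= ?orbT.
  by move/sd; rewrite s2 => ->; rewrite negbK.
pose idx (k : nat) := if k < n - 3 then k.+1 else n - 1.
have hk (k : 'I_(n - 2)) : idx k < n by rewrite /idx; case: ifP => _; have := ltn_ord k; clia.
pose h k := f (Ordinal (hk k)).
have hi : injective h.
  move=> k1 k2 /fi /(congr1 val) /= hk12; apply: val_inj => /=.
  move: hk12; rewrite /idx; have := ltn_ord k1; have := ltn_ord k2.
  by case: (ltnP k1 (n - 3)) => c1; case: (ltnP k2 (n - 3)) => c2 => a1 a2 b; clia.
have side k : (h k < n - 3) = ~~ (f z < n - 3).
  rewrite /h; case: (ltnP k (n - 3)) => hk3.
    rewrite (sd _ _ (e0 (Ordinal (hk k)) _)) ?negbK //= /idx hk3.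
    by apply/andP; split; clia.
  have -> : Ordinal (hk k) = q1 by apply: val_inj; rewrite /= /idx ltnNge hk3.
  exact: s1.
have := @img_bound M (n - 3) (n - 2) h (~~ (f z < n - 3)) hM hi side.
clia.
Qed.


Lemma upperTi N n i (e : rel 'I_N) : 8 <= n -> N = 2 * n - 5 -> symmetric e -> irreflexive e ->
  #|[set y | #|nb e y| <= 3]| <= 5 ->
  ((forall v, #|nb e v| <= n - 2) -> forall v, n - 3 <= #|nb e v|) ->
  contains e (Ti i n).
Proof.
move=> n8 hN se ie hY hZ; have [h1 h2] := core n8 hN se ie hY hZ.
by rewrite /Ti; case: (i == 1).
Qed.

Unset Implicit Arguments.

Theorem theorem4p2 (n i : nat) (hn : 8 <= n) (hi : (i == 1) || (i == 2)) :
  ramsey_number_is (Ti i n) (Tprime n) (2 * n - 5) /\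
  ramsey_number_is (Ti i n) (Tstar n) (2 * n - 5).
Proof.
split; (split; [clia|split]).
- move=> G [sG iG]; case: (classic (contains (compl G) (Tprime n))) => h; [by right|left].
  exact: (upperTi i hn erefl sG iG (part1Y hn erefl sG iG h) (part1Z hn erefl sG iG h)).
- move=> M M0 MN hR; have [] := hR (G0 M (n - 3)) (G0_simple M (n - 3)).
  + by apply: noTi; clia.
  + by apply: noTp; clia.
- move=> G [sG iG]; case: (classic (contains (compl G) (Tstar n))) => h; [by right|left].
  exact: (upperTi i hn erefl sG iG (part2Y hn erefl sG iG h) (part2Z hn erefl sG iG h)).
- move=> M M0 MN hR; have [] := hR (G0 M (n - 3)) (G0_simple M (n - 3)).
  + by apply: noTi; clia.
  + by apply: noTs; clia.
Qed.
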